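(* For every integer $n\ge 1$, $$a_n\ge\max\{\tau(n),\tau(2n-1),\tau_o(n+1)\},$$ and more precisely $$a_n\ge \tau(n)+\tau(2n-1)+\tau_o(n+1)-3-\delta_{n\equiv 0 \bmod 2}-\delta_{n\equiv -1\bmod 3}.$$
   Context: For an integer $n\ge1$, $a_n$ denotes the number of integers $x$ with $0\le x\le n-1$ for which there exists a positive integer $h$ with $h\mid x$ and $(2x+1)\mid(2n-2h+1)$ (every positive integer divides $0$). $\tau(m)$ is the number of positive divisors of $m$, $\tau_o(m)$ is the number of odd positive divisors of $m$, and $\delta_P$ equals $1$ if the condition $P$ holds and $0$ otherwise. *)

(* Defs.v *)
From mathcomp Require Import all_boot all_order all_algebra.
Set Implicit Arguments. Unset Strict Implicit. Unset Printing Implicit Defensive.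
Import Order.TTheory GRing.Theory Num.Theory.

(* The search for h is bounded by x.+1: if x > 0 then h | x forces h <= x,
   and if x = 0 then h = 1 already works; so this is equivalent to the
   unbounded existential. *)
Definition good_x (n x : nat) : bool :=
  [exists h : 'I_(x.+2),
     [&& 0 < (h : nat), (h : nat) %| x &
      ((2 * x + 1)%N%:Z %| ((2 * n)%N%:Z - (2 * (h : nat))%N%:Z + 1)%R)%Z]].

Definition a_seq (n : nat) : nat := #|[set x : 'I_n | good_x n x]|.

Definition tau (m : nat) : nat := size (divisors m).
Definition tau_o (m : nat) : nat := size [seq d <- divisors m | odd d].

(* Main.v *)
Require Import Defs.
From mathcomp Require Import all_boot all_order all_algebra.
From mathcomp Require Import zify.
Import Order.TTheory GRing.Theory Num.Theory.


Lemma a_lb n (U : seq nat) : uniq U -> all (fun x => (x < n)%N && good_x n x) U ->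
  (size U <= a_seq n)%N.
Proof.
move=> uU aU; rewrite /a_seq; apply/card_geqP.
exists (pmap insub U : seq 'I_n); split.
- exact: pmap_sub_uniq.
- rewrite size_pmap_sub; rewrite -[RHS]count_predT; apply: eq_in_count => x xU.
  by move/allP: aU => /(_ x xU) /andP[].
- move=> x; rewrite mem_pmap_sub inE => xU.
  by move/allP: aU => /(_ _ xU) /andP[].
Qed.

Lemma good_nat n x h : (0 < h)%N -> (h %| x)%N -> (h <= n)%N ->
  (2 * x + 1 %| 2 * n - 2 * h + 1)%N -> good_x n x.
Proof.
move=> h0 hx hn hd; apply/existsP.
have [->|x0] := eqVneq x 0%N.
  exists (Ordinal (isT : (1 < 2)%N)) => /=. by rewrite dvd1z.
have hle : (h <= x)%N by apply: dvdn_leq; lia.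
have hlt : (h < x.+2)%N by lia.
exists (Ordinal hlt) => /=; rewrite h0 hx /=.
have -> : ((2 * n)%N%:Z - (2 * h)%N%:Z + 1 = (2 * n - 2 * h + 1)%N%:Z)%R by lia.
exact: hd.
Qed.

Section Fam.
Variable n : nat.
Hypothesis n0 : (0 < n)%N.

Definition A := [seq n - d | d <- divisors n].
Definition B := [seq e./2 | e <- divisors (2*n-1)].
Definition C := [seq d./2 | d <- [seq d <- divisors n.+1 | odd d]].

Lemma half_odd e : odd e -> (2 * e./2 + 1 = e)%N.
Proof. move=> oe; rewrite -{2}(odd_double_half e) oe -muln2; lia. Qed.

Lemma odd2n1 : odd (2 * n - 1).
Proof. have -> : (2*n-1 = (n.-1).*2.+1)%N by rewrite -mul2n; lia.
by rewrite /= odd_double. Qed.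

Lemma memA x : x \in A -> exists2 d, (d %| n)%N & (0 < d)%N /\ (d <= n)%N /\ x = (n - d)%N.
Proof.
case/mapP=> d; rewrite -dvdn_divisors // => dn ->; exists d => //.
split; first exact: dvdn_gt0 n0 dn.
by split; first exact: dvdn_leq n0 dn.
Qed.

Lemma memB x : x \in B -> (2 * x + 1 %| 2 * n - 1)%N.
Proof.
case/mapP=> e; rewrite -dvdn_divisors; last by lia.
move=> en ->; rewrite half_odd //; exact: dvdn_odd en odd2n1.
Qed.

Lemma memC x : x \in C -> (2 * x + 1 %| n.+1)%N.
Proof.
case/mapP=> d; rewrite mem_filter -dvdn_divisors // => /andP[od dn] ->.
by rewrite half_odd.
Qed.

Lemma goodA x : x \in A -> (x < n)%N && good_x n x.
Proof.
case/memA=> d dn [d0 [dle ->]]; apply/andP; split; first lia.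
apply: (@good_nat n _ d) => //; first by rewrite dvdn_sub.
have -> : (2 * n - 2 * d + 1 = 2 * (n - d) + 1)%N by lia.
by [].
Qed.

Lemma goodB x : x \in B -> (x < n)%N && good_x n x.
Proof.
move/memB=> xd; have := dvdn_leq _ xd => le; apply/andP; split; first lia.
apply: (@good_nat n _ 1) => //.
have -> : (2 * n - 2 * 1 + 1 = 2 * n - 1)%N by lia.
by [].
Qed.

Lemma goodC x : x \in C -> (x < n)%N && good_x n x.
Proof.
move/memC=> xd; have le := dvdn_leq (isT : (0 < n.+1)%N) xd.
apply/andP; split; first lia.
have [->|x0] := eqVneq x 0%N.
  by apply: (@good_nat n _ 1) => //; rewrite dvd1n.
apply: (@good_nat n _ x) => //; first lia; first lia.
have e : (n.+1 * 2 = (2 * n - 2 * x + 1) + (2 * x + 1))%N by lia.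
by rewrite -(dvdn_addl _ (dvdnn (2 * x + 1))) -e dvdn_mulr.
Qed.

Lemma uniqA : uniq A.
Proof.
rewrite map_inj_in_uniq ?divisors_uniq // => d1 d2.
rewrite -!dvdn_divisors // => /(dvdn_leq n0) ? /(dvdn_leq n0) ?; lia.
Qed.

Lemma uniqB : uniq B.
Proof.
rewrite map_inj_in_uniq ?divisors_uniq // => d1 d2 h1 h2 e.
have p : (0 < 2 * n - 1)%N by lia.
rewrite -dvdn_divisors // in h1; rewrite -dvdn_divisors // in h2.
have o1 := dvdn_odd h1 odd2n1; have o2 := dvdn_odd h2 odd2n1.
by rewrite -(half_odd _ o1) -(half_odd _ o2) e.
Qed.

Lemma uniqC : uniq C.
Proof.
rewrite map_inj_in_uniq ?filter_uniq ?divisors_uniq // => d1 d2.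
rewrite !mem_filter => /andP[o1 _] /andP[o2 _] e.
by rewrite -(half_odd _ o1) -(half_odd _ o2) e.
Qed.

Lemma sizeA : size A = tau n. Proof. by rewrite size_map. Qed.
Lemma sizeB : size B = tau (2 * n - 1). Proof. by rewrite size_map. Qed.
Lemma sizeC : size C = tau_o n.+1. Proof. by rewrite size_map. Qed.

Lemma AB x : x \in A -> x \in B -> x \in [:: 0%N; n.-1].
Proof.
case/memA=> d dn [d0 [dle ->]] /memB hB.
have hs : (2 * (n - d) + 1 %| (2 * n - 1) - (2 * (n - d) + 1))%N.
  by rewrite dvdn_sub.
have [d1|d1] := eqVneq d 1%N.
  by rewrite d1 subn1 !inE eqxx orbT.
have pos : (0 < 2 * n - 1 - (2 * (n - d) + 1))%N by lia.
have le := dvdn_leq pos hs.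
case/dvdnP: dn => k ek.
have k1 : k = 1%N.
  destruct k as [|[|k]]; [lia | done |].
  move: ek; rewrite !mulSn => ek; lia.
by rewrite inE ek k1 mul1n subnn.
Qed.

Definition L := (0%N :: (if odd n then [::] else [:: n./2]) ++
                   (if (3 %| n.+1)%N then [:: 1%N] else [::])).

Lemma CAB x : x \in C -> x \in A ++ B -> x \in L.
Proof.
move/memC=> hC; rewrite mem_cat => /orP[].
  case/memA=> d dn [d0 [dle ex]].
  have h2 : (2 * x + 1 %| (n.+1 * 2) - (2 * x + 1))%N.
    by rewrite dvdn_sub ?dvdn_mulr.
  have pos : (0 < n.+1 * 2 - (2 * x + 1))%N by lia.
  have le := dvdn_leq pos h2.
  case/dvdnP: dn => k ek.
  destruct k as [|[|[|k]]]; [lia | by rewrite inE ex ek mul1n subnn | |].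
  + have od : odd n = false by rewrite ek oddM.
    have -> : x = n./2 by rewrite ex ek mul2n doubleK; lia.
    by rewrite /L od !inE eqxx orbT.
  + move: ek; rewrite !mulSn => ek; lia.
move=> /memB hB.
have h3 : (2 * x + 1 %| (n.+1 * 2) - (2 * n - 1))%N.
  by rewrite dvdn_sub ?dvdn_mulr.
have e3 : (n.+1 * 2 - (2 * n - 1) = 3)%N by lia.
rewrite e3 in h3.
have le := dvdn_leq (isT : (0 < 3)%N) h3.
destruct x as [|[|x]]; first by rewrite inE.
  rewrite /L hC.
  by rewrite inE mem_cat inE eqxx !orbT.
lia.
Qed.

End Fam.

Lemma count_small (T : eqType) (s L : seq T) (P : pred T) :
  uniq s -> {in s, forall x, P x -> x \in L} -> (count P s <= size L)%N.
Proof.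
move=> us sub; rewrite -size_filter; apply: uniq_leq_size; first exact: filter_uniq.
move=> x; rewrite mem_filter => /andP[Px xs]; exact: sub.
Qed.

Local Open Scope ring_scope.
Theorem theorem10 (n : nat) : (1 <= n)%N ->
  (maxn (tau n) (maxn (tau (2 * n - 1)) (tau_o n.+1)) <= a_seq n)%N /\
  ((tau n)%:Z + (tau (2 * n - 1))%:Z + (tau_o n.+1)%:Z - 3
     - (~~ odd n)%:Z - (n.+1 %% 3 == 0)%N%:Z <= (a_seq n)%:Z).
Proof.
move=> n0.
have hA : (tau n <= a_seq n)%N.
  rewrite -sizeA; apply: a_lb; first exact: uniqA.
  by apply/allP => x; apply: goodA.
have hB : (tau (2 * n - 1) <= a_seq n)%N.
  rewrite -(sizeB n); apply: a_lb; first exact: uniqB.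
  by apply/allP => x; apply: goodB.
have hC : (tau_o n.+1 <= a_seq n)%N.
  rewrite -(sizeC n); apply: a_lb; first exact: uniqC.
  by apply/allP => x; apply: goodC.
split; first by rewrite !geq_max hA hB hC.
set B' := [seq x <- B n | x \notin A n].
set C' := [seq x <- C n | x \notin A n ++ B n].
have cB : (count (mem (A n)) (B n) <= 2)%N.
  have -> : 2%N = size [:: 0%N; n.-1] by [].
  apply: count_small; first exact: uniqB.
  by move=> x xB xA; apply: AB.
have cC : (count (mem (A n ++ B n)) (C n) <= size (L n))%N.
  apply: count_small; first exact: uniqC.
  by move=> x xC xAB; apply: CAB.
have sB' : size B' = (size (B n) - count (mem (A n)) (B n))%N.
  rewrite size_filter -(count_predC (mem (A n)) (B n)) addKn.
  by [].
have sC' : size C' = (size (C n) - count (mem (A n ++ B n)) (C n))%N.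
  rewrite size_filter -(count_predC (mem (A n ++ B n)) (C n)) addKn.
  by [].
have cB2 := count_size (mem (A n)) (B n).
have cC2 := count_size (mem (A n ++ B n)) (C n).
have uU : uniq (A n ++ (B' ++ C')).
  rewrite cat_uniq (uniqA n n0) /=; apply/andP; split.
    apply/hasPn => x; rewrite mem_cat !mem_filter => /orP[/andP[] //|/andP[]].
    by rewrite mem_cat negb_or => /andP[].
  rewrite cat_uniq !filter_uniq ?(uniqB n n0) ?(uniqC n n0) //=.
  rewrite andbT; apply/hasPn => x; rewrite !mem_filter => /andP[nAB _].
  by apply/negP => /andP[_ xB]; move: nAB; rewrite mem_cat xB orbT.
have aU : all (fun x => (x < n)%N && good_x n x) (A n ++ (B' ++ C')).
  apply/allP => x; rewrite !mem_cat !mem_filter => /orP[/(goodA n n0) -> //|/orP[]/andP[_]].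
    by move=> xB; apply: (@goodB n n0 x xB).
  by move=> xC; apply: (@goodC n n0 x xC).
have := @a_lb n _ uU aU; rewrite !size_cat sB' sC' sizeA sizeB sizeC => le.
have sL : size (L n) = (1 + ~~ odd n + (n.+1 %% 3 == 0))%N.
  rewrite /L /= size_cat; case: (odd n) => /=; rewrite /dvdn;
    case: (_ == _) => //.
move: cC; rewrite sL => cC.
move: le cC cB; rewrite -sizeA -(sizeB n) -(sizeC n).
case: (odd n); case: (_ == _) => /=; lia.
Qed.
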